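(* Let $H$ be a $3$-graph, let $K_H=3v(H)^3$, let $C>0$ and $\delta\in\mathbb{R}$, and let $G$ be a $3$-partite $3$-graph with vertex classes $X,Y,Z$, each of size $n$. If $e(G)\ge C n^{3-\delta}$, then there exists a vertex $z\in Z$ such that (1) $e(\mathcal{L}_z)\ge (C/2)\,n^{2-\delta}$, and (2) the number of $H$-forbidden $4$-cycles contained in $\mathcal{L}_z$ is at most $(2K_H/C)\,n^{1+\delta}\,e(\mathcal{L}_z)$.
   Context: A $3$-graph is a $3$-uniform hypergraph; $v(\cdot)$ and $e(\cdot)$ denote numbers of vertices and edges. $G$ is $3$-partite with classes $X,Y,Z$: every edge of $G$ contains exactly one vertex of each class. For $z\in Z$, the link graph $\mathcal{L}_z$ is the bipartite graph between $X$ and $Y$ whose edges are the pairs $xy$ ($x\in X$, $y\in Y$) such that $\{x,y,z\}$ is an edge of $G$. A $4$-cycle between $X$ and $Y$ means a $4$-cycle in the complete bipartite graph on $X\cup Y$ (two vertices in $X$, two in $Y$). For such a $4$-cycle $\mathcal{C}$, a $4$-disk with boundary $\mathcal{C}$ and centre $z\in Z$ is the set of four edges $\{x,y,z\}$ of $G$, $xy\in\mathcal{C}$, which exists exactly when $\mathcal{C}\subseteq\mathcal{L}_z$; so the number of $4$-disks with boundary $\mathcal{C}$ equals the number of $z\in Z$ with $\mathcal{C}\subseteq \mathcal{L}_z$. With $K_H=3v(H)^3$, a $4$-cycle between $X$ and $Y$ is $H$-admissible if it is the boundary of more than $K_H$ distinct $4$-disks in $G$, and $H$-forbidden if it is the boundary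 of at most $K_H$ (possibly $0$) distinct $4$-disks in $G$. *)

(* Defs.v *)
From mathcomp Require Import all_boot all_order all_algebra.
From mathcomp Require Import all_classical all_reals all_analysis.
Set Implicit Arguments. Unset Strict Implicit. Unset Printing Implicit Defensive.

(* A 3-partite 3-graph G with classes X = Y = Z = 'I_n (three disjoint copies)
   is a set of triples ((x, y), z). *)
Definition tri3graph (n : nat) := {set 'I_n * 'I_n * 'I_n}.

Definition link n (G : tri3graph n) (z : 'I_n) : {set 'I_n * 'I_n} :=
  [set p | ((p.1, p.2), z) \in G].

(* A 4-cycle between X and Y is determined by a 2-subset of X and a
   2-subset of Y: the cycle x1 y1 x2 y2 with edges {x,y}, x in A, y in B. *)
Definition is_4cycle n (c : {set 'I_n} * {set 'I_n}) : bool :=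
  (#|c.1| == 2) && (#|c.2| == 2).

Definition cycle_in n (c : {set 'I_n} * {set 'I_n}) (L : {set 'I_n * 'I_n}) : bool :=
  [forall x in c.1, forall y in c.2, (x, y) \in L].

(* Number of 4-disks with boundary c = number of centres z with c in L_z. *)
Definition num_disks n (G : tri3graph n) (c : {set 'I_n} * {set 'I_n}) : nat :=
  #|[set z : 'I_n | cycle_in c (link G z)]|.

Definition KH (vH : nat) : nat := 3 * vH ^ 3.

Definition forbidden (vH : nat) n (G : tri3graph n) (c : {set 'I_n} * {set 'I_n}) : bool :=
  num_disks G c <= KH vH.

Definition num_forbidden_in_link (vH : nat) n (G : tri3graph n) (z : 'I_n) : nat :=
  #|[set c : {set 'I_n} * {set 'I_n} |
      is_4cycle c && cycle_in c (link G z) && forbidden vH G c]|.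

(* Main.v *)
Require Import Defs.
From mathcomp Require Import all_boot all_order all_algebra.
From mathcomp Require Import all_classical all_reals all_analysis.
From mathcomp Require Import zify ring lra.

Lemma card_sum (T : finType) (A : {set T}) : #|A| = \sum_x (x \in A : nat).
Proof. by rewrite -sum1_card big_mkcond /=; apply: eq_bigr => x _; case: (x \in A). Qed.

Lemma cardG n (G : tri3graph n) : #|G| = \sum_z #|link G z|.
Proof.
rewrite card_sum.
have -> : \sum_(t : 'I_n * 'I_n * 'I_n) (t \in G : nat) = \sum_(p : 'I_n * 'I_n) \sum_(z : 'I_n) (((p, z) \in G) : nat).
  by rewrite pair_big /=; apply: eq_bigr => -[p z].
rewrite exchange_big /=; apply: eq_bigr => z _.
rewrite card_sum; apply: eq_bigr => -[x y] _; by rewrite inE.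
Qed.

Lemma cyc_card n : #|[set c : {set 'I_n} * {set 'I_n} | is_4cycle c]| <= n ^ 4.
Proof.
have -> : [set c : {set 'I_n} * {set 'I_n} | is_4cycle c] =
  finset.setX [set A : {set 'I_n} | #|A| == 2] [set A : {set 'I_n} | #|A| == 2].
  by apply/setP => -[a b]; rewrite !inE.
rewrite cardsX card_draws card_ord bin2 -divn2.
have h : (n * n.-1) %/ 2 <= n * n.
  apply: leq_trans (leq_div _ _) _; apply: leq_mul => //; exact: leq_pred.
have := leq_mul h h. by rewrite -!mulnA !expnS expn0 muln1 !mulnA.
Qed.

Lemma sum_forb (vH n : nat) (G : tri3graph n) :
  \sum_z num_forbidden_in_link vH G z <= KH vH * n ^ 4.
Proof.
rewrite /num_forbidden_in_link.
under eq_bigr => z _ do rewrite card_sum.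
rewrite exchange_big /=.
apply: (@leq_trans (\sum_c ((c \in [set c : {set 'I_n} * {set 'I_n} | is_4cycle c]) : nat) * KH vH)).
  apply: leq_sum => c _.
  rewrite inE.
  case P: (is_4cycle c) => /=; last by rewrite big1 // => z _; rewrite inE P.
  case F: (forbidden vH G c); last by rewrite big1 // => z _; rewrite inE P F andbF.
  rewrite mul1n; move: F; rewrite /forbidden /num_disks card_sum => F.
  apply: leq_trans F; apply: leq_sum => z _; rewrite !inE P /=; case: (cycle_in c (link G z)) => //; exact: leq_b1.
by rewrite -big_distrl /= -card_sum mulnC leq_mul2l cyc_card orbT.
Qed.
Import Order.TTheory GRing.Theory Num.Theory.
Local Open Scope ring_scope.

Lemma avg (R : realType) n (hn : (0 < n)%N) (g : 'I_n -> R) :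
  0 <= \sum_z g z -> exists z, 0 <= g z.
Proof.
move=> h; have [//|hn'] := pselect (exists z, 0 <= g z).
have hlt : forall z, g z < 0.
  move=> z; rewrite ltNge; apply/negP => hz; apply: hn'; by exists z.
have : \sum_z g z < 0.
  rewrite (bigD1 (Ordinal hn)) //=.
  have : \sum_(i | i != Ordinal hn) g i <= 0 by apply: sumr_le0 => i _; exact: ltW.
  have := hlt (Ordinal hn); lra.
lra.
Qed.

Theorem lemma3p1 (R : realType)
  (VH : finType) (EH : {set {set VH}})
  (hH : forall e, e \in EH -> #|e| = 3%N)
  (C delta : R) (hC : 0 < C)
  (n : nat) (hn : (0 < n)%N) (G : tri3graph n)
  (hG : C * (n%:R `^ (3 - delta)) <= (#|G|)%:R) :
  exists z : 'I_n,
    (C / 2) * (n%:R `^ (2 - delta)) <= (#|link G z|)%:R /\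
    (num_forbidden_in_link #|VH| G z)%:R
      <= (2 * (KH #|VH|)%:R / C) * (n%:R `^ (1 + delta)) * (#|link G z|)%:R.
Proof.
set N : R := n%:R.
have hN : 0 < N by rewrite /N ltr0n.
have hN0 : N != 0 by rewrite gt_eqF.
set P3 := N `^ (3 - delta); set P2 := N `^ (2 - delta); set u := N `^ (1 + delta).
have hu : 0 < u by exact: powR_gt0.
have hP2 : 0 <= P2 by exact: powR_ge0.
have hQ : P3 * u = N ^+ 4.
  rewrite /P3 /u -powRD; last by rewrite hN0 implybT.
  have -> : 3 - delta + (1 + delta) = 4%:R by ring.
  by rewrite powR_mulrn // ltW.
have hP : N * P2 = P3.
  rewrite /P3 /P2 -{1}(powRr1 (ltW hN)) -powRD; last by rewrite hN0 implybT.
  by congr (_ `^ _); ring.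
set e := fun z => (#|link G z|)%:R : R.
set f := fun z => (num_forbidden_in_link #|VH| G z)%:R : R.
have hE : \sum_z e z = (#|G|)%:R by rewrite cardG natr_sum.
have hF0 := @sum_forb #|VH| n G.
have hF : \sum_z f z <= (KH #|VH|)%:R * N ^+ 4.
  by rewrite -natr_sum -natrX -natrM ler_nat.
have he0 : forall z, 0 <= e z by move=> z; rewrite /e ler0n.
have hf0 : forall z, 0 <= f z by move=> z; rewrite /f ler0n.
set K : R := (KH #|VH|)%:R.
have hK0 : 0 <= K by rewrite /K ler0n.
have [K0|Kpos] := eqVneq K 0.
  have hf : forall z, f z = 0.
    move=> z.
    have K0n : KH #|VH| = 0%N by apply/eqP; rewrite -(pnatr_eq0 R) -/K K0.
    move: hF0; rewrite K0n mul0n (bigD1 z) //= => h.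
    have : (num_forbidden_in_link #|VH| G z <= 0)%N by apply: leq_trans h; exact: leq_addr.
    by rewrite leqn0 /f => /eqP ->.
  have [z hz] : exists z, 0 <= e z - C / 2 * P2.
    apply: (@avg R n hn (fun z => e z - C / 2 * P2)).
    rewrite sumrB sumr_const card_ord hE.
    have -> : forall x : R, x *+ n = N * x by move=> x; rewrite mulr_natl.
    have : N * (C / 2 * P2) = C/2 * P3 by rewrite -hP; ring.
    move=> ->; rewrite -/P3 in hG.
    have : 0 <= C * P3 by apply: mulr_ge0; [exact: ltW | exact: powR_ge0].
    lra.
  exists z; split; first by move: hz => /=; lra.
  by rewrite -/(f z) hf K0 mulr0 mul0r mul0r.
have hK : 0 < K by rewrite lt_def Kpos hK0.
have hKu : 0 <= 2 * K * u by rewrite mulr_ge0 // ?mulr_ge0 // ltW.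
have [z hz] : exists z, 0 <= 2 * K * u * e z - C * f z - 2 * K * u * (C / 2 * P2).
  apply: (@avg R n hn (fun z => 2 * K * u * e z - C * f z - 2 * K * u * (C / 2 * P2))).
  rewrite !sumrB sumr_const card_ord -!mulr_sumr hE.
  have -> : forall x : R, x *+ n = N * x by move=> x; rewrite mulr_natl.
  have h3 : N * (2 * K * u * (C / 2 * P2)) = K * C * N ^+ 4 by rewrite -hQ -hP; field.
  rewrite h3.
  have h1 : 2 * K * u * (C * P3) <= 2 * K * u * #|G|%:R by apply: ler_wpM2l.
  have h1' : 2 * K * u * (C * P3) = 2 * K * C * N ^+ 4 by rewrite -hQ; ring.
  have h2 : C * (\sum_i f i) <= C * (K * N ^+ 4) by apply: ler_wpM2l; [exact: ltW | exact: hF].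
  lra.
exists z; split.
  have hCf : 0 <= C * f z by rewrite mulr_ge0 // ltW.
  have : 0 <= 2 * K * u * (e z - C / 2 * P2) by lra.
  rewrite pmulr_rge0; first by rewrite subr_ge0.
  by rewrite mulr_gt0 // mulr_gt0.
rewrite -/(f z) -/(e z) -(ler_pM2l hC).
have -> : C * (2 * K / C * u * e z) = 2 * K * u * e z by field; rewrite gt_eqF.
have hT : 0 <= 2 * K * u * (C / 2 * P2) by rewrite mulr_ge0 // mulr_ge0 // divr_ge0 // ltW.
lra.
Qed.
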